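(* Consider the 2NC-TAP instance with node set $\{r,v_1,v_2,v_3,p_1,p_2,p_3,q_1,q_2,q_3\}$, tree $T$ with edges $rv_i$, $v_ip_i$, $v_iq_i$ for $i=1,2,3$ (all of cost $0$), and six links of cost $1$: $p_1p_2,p_2p_3,p_3p_1,q_1q_2,q_2q_3,q_3q_1$. Then every feasible link set has cost at least $4$ (and there is one of cost $4$), while the vector $\hat x$ with $\hat x_\ell=\frac12$ for all six links is feasible for the partition LP $(P)$ and has cost $3$. Consequently the integrality ratio of $(P)$ for 2NC-TAP is at least $\frac43$.
   Context: An instance of 2NC-TAP consists of a simple undirected graph $G=(V,E)$, a spanning tree $T$ of $G$ with cost-$0$ edges, and nonnegative costs on the links $L(G)=E\setminus T$; a link set $F$ is feasible if $(V,T\cup F)$ is 2-node connected. Let $N(T)$ be the set of non-leaf nodes of $T$. For $u\in N(T)$, let $\Pi_u$ be the set of partitions $\mathcal P$ of $V\setminus\{u\}$ such that the vertex set of each connected component of $T-u$ is contained in a set of $\mathcal P$. A link crosses $\mathcal P\in\Pi_u$ if neither end node is $u$ and its end nodes lie in different sets of $\mathcal P$. Partition LP $(P)$: minimize $\sum_\ell\mathrm{cost}(\ell)x_\ell$ subject to $\sum_{\ell\text{ crosses }\mathcal P}x_\ell\ge|\mathcal P|-1$ for all $u\in N(T)$, $\mathcal P\in\Pi_u$, and $x\ge 0$. *)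

(* Defs.v *)
From HB Require Import structures.
From mathcomp Require Import all_boot all_order all_algebra.
Set Implicit Arguments. Unset Strict Implicit. Unset Printing Implicit Defensive.
Import Order.TTheory GRing.Theory Num.Theory.
Local Open Scope ring_scope.

Definition restrict (V : finType) (e : rel V) (S : {set V}) : rel V :=
  fun a b => [&& a \in S, b \in S & e a b].

Definition connected_on (V : finType) (e : rel V) (S : {set V}) : Prop :=
  forall x y, x \in S -> y \in S -> connect (restrict e S) x y.

Definition two_node_connected (V : finType) (e : rel V) : Prop :=
  [/\ (2 < #|V|)%N, connected_on e setT & forall u : V, connected_on e (setT :\ u)].

Definition link_rel (V L : finType) (ends : L -> V * V) (F : {set L}) : rel V :=
  fun a b => [exists l in F, (((ends l).1 == a) && ((ends l).2 == b))
                             || (((ends l).1 == b) && ((ends l).2 == a))].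

Definition feasible (V L : finType) (tr : rel V) (ends : L -> V * V)
  (F : {set L}) : Prop :=
  two_node_connected (fun a b => tr a b || link_rel ends F a b).

Definition link_cost (L : finType) (cost : L -> rat) (F : {set L}) : rat :=
  \sum_(l in F) cost l.

Definition nonleaf (V : finType) (tr : rel V) (u : V) : bool :=
  (1 < #|[set w | tr u w]|)%N.

Definition in_Pi (V : finType) (tr : rel V) (u : V) (P : {set {set V}}) : Prop :=
  partition P (setT :\ u) /\
  forall x, x != u ->
    exists2 B, B \in P & [set y | connect (restrict tr (setT :\ u)) x y] \subset B.

Definition crosses (V L : finType) (ends : L -> V * V) (u : V)
  (P : {set {set V}}) (l : L) : bool :=
  [&& (ends l).1 != u, (ends l).2 != u & pblock P (ends l).1 != pblock P (ends l).2].

Definition partLP_feasible (V L : finType) (tr : rel V) (ends : L -> V * V)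
  (x : L -> rat) : Prop :=
  (forall l, 0 <= x l) /\
  forall (u : V) (P : {set {set V}}), nonleaf tr u -> in_Pi tr u P ->
    (#|P|%:R - 1) <= \sum_(l | crosses ends u P l) x l.

Definition LP_cost (L : finType) (cost : L -> rat) (x : L -> rat) : rat :=
  \sum_(l : L) cost l * x l.

(* nodes: 0 = r, 1,2,3 = v_1,v_2,v_3, 4,5,6 = p_1,p_2,p_3, 7,8,9 = q_1,q_2,q_3 *)
Definition ex_tree_edges : seq (nat * nat) :=
  [:: (0,1); (0,2); (0,3); (1,4); (1,7); (2,5); (2,8); (3,6); (3,9)]%N.

Definition ex_tr : rel 'I_10 :=
  fun a b => ((val a, val b) \in ex_tree_edges) || ((val b, val a) \in ex_tree_edges).

(* links: p1p2, p2p3, p3p1, q1q2, q2q3, q3q1 *)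
Definition ex_links : seq (nat * nat) :=
  [:: (4,5); (5,6); (6,4); (7,8); (8,9); (9,7)]%N.

Definition ex_ends (l : 'I_6) : 'I_10 * 'I_10 :=
  (inord (nth (0,0)%N ex_links l).1, inord (nth (0,0)%N ex_links l).2).

Definition ex_cost (l : 'I_6) : rat := 1.

Definition ex_xhat (l : 'I_6) : rat := 1 / 2.

(* Main.v *)
Require Import Defs.
From HB Require Import structures.
From mathcomp Require Import all_boot all_order all_algebra zify ring lra.
Import Order.TTheory GRing.Theory Num.Theory.


Definition tN (a b : nat) : bool :=
  ((a, b) \in ex_tree_edges) || ((b, a) \in ex_tree_edges).
Definition e1 (l : nat) : nat := (nth (0,0)%N ex_links l).1.
Definition e2 (l : nat) : nat := (nth (0,0)%N ex_links l).2.

Lemma endsE1 (l : 'I_6) : nat_of_ord (ex_ends l).1 = e1 l.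
Proof. rewrite /ex_ends /= inordK //; case: l => [[|[|[|[|[|[|m]]]]]] Hl] //. Qed.
Lemma endsE2 (l : 'I_6) : nat_of_ord (ex_ends l).2 = e2 l.
Proof. rewrite /ex_ends /= inordK //; case: l => [[|[|[|[|[|[|m]]]]]] Hl] //. Qed.

Section Reach.
Variable R : nat -> nat -> bool.
Variable E : rel 'I_10.
Hypothesis HRE : forall a b : 'I_10, R a b -> E a b.

Fixpoint reach (k x : nat) : seq nat :=
  if k is k'.+1 then
    let s := reach k' x in
    undup (s ++ flatten [seq [seq b <- iota 0 10 | R a b] | a <- s])
  else [:: x].

Lemma reachP k (x : 'I_10) b : b \in reach k x ->
  exists2 y : 'I_10, nat_of_ord y = b & connect E x y.
Proof.
elim: k b => [|k IH] b.
  by rewrite /= inE => /eqP ->; exists x.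
have -> : reach k.+1 x = undup (reach k x ++ flatten [seq [seq b <- iota 0 10 | R a b] | a <- reach k x]) by [].
rewrite mem_undup mem_cat => /orP [/IH //|/flattenP [s2 /mapP [a Ha ->]]].
rewrite mem_filter mem_iota => /andP [Rab /andP [_ Hb]].
have [y ya cxy] := IH _ Ha.
exists (Ordinal Hb) => //.
apply: connect_trans cxy (connect1 _).
by apply: HRE; rewrite ya.
Qed.
End Reach.

Definition par (a : nat) : nat := ((a - 4) %% 3).+1.

Definition chk_leaf : bool :=
  all (fun a => all (fun b => tN a b ==> (b == par a)) (iota 0 10)) (iota 4 6).
Lemma chk_leafT : chk_leaf. Proof. by vm_compute. Qed.

Definition rep (u i : nat) : nat := if u == 0 then i.+1 else nth 0 [:: 0; u+3; u+6] i.
Definition cls (u a : nat) : nat :=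
  if u == 0 then (a.-1 %% 3) else if a == u+3 then 1 else if a == u+6 then 2 else 0.

Definition RT (u a b : nat) : bool := [&& a != u, b != u & tN a b].

Definition chk_comp : bool :=
  all (fun u => all (fun x => (x == u) || ((cls u x < 3) && (rep u (cls u x) \in reach (RT u) 9 x)))
     (iota 0 10)) (iota 0 4).
Lemma chk_compT : chk_comp. Proof. by vm_compute. Qed.

Definition chk_rep : bool := all (fun u => all (fun i => rep u i < 10) (iota 0 3)) (iota 0 4).
Lemma chk_repT : chk_rep. Proof. by vm_compute. Qed.

Definition chk_ends : bool := all (fun l => (3 < e1 l) && (3 < e2 l) && (e1 l < 10) && (e2 l < 10)
   && (cls 0 (e1 l) < 3) && (cls 1 (e1 l) < 3) && (cls 2 (e1 l) < 3) && (cls 3 (e1 l) < 3)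
   && (cls 0 (e2 l) < 3) && (cls 1 (e2 l) < 3) && (cls 2 (e2 l) < 3) && (cls 3 (e2 l) < 3)) (iota 0 6).
Lemma chk_endsT : chk_ends. Proof. by vm_compute. Qed.

Definition chk_comb : bool :=
  all (fun u => all (fun g0 => all (fun g1 => all (fun g2 =>
    let g := [:: g0; g1; g2] in
    2 * ((g1 != g0) + (g2 != g0)) <= count (fun l => nth 0 g (cls u (e1 l)) != nth 0 g (cls u (e2 l))) (iota 0 6))
  (iota 0 3)) (iota 0 3)) (iota 0 3)) (iota 0 4).
Lemma chk_combT : chk_comb. Proof. by vm_compute. Qed.

Definition F0n : seq nat := [:: 0; 1; 3; 4].
Definition lN (a b : nat) : bool :=
  has (fun l => (l \in F0n) && (((e1 l == a) && (e2 l == b)) || ((e1 l == b) && (e2 l == a)))) (iota 0 6).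
Definition RF (u a b : nat) : bool := [&& a != u, b != u & tN a b || lN a b].
Definition chk_F0 : bool :=
  all (fun u => all (fun x => (x == u) || all (fun y => (y == u) || (y \in reach (RF u) 9 x)) (iota 0 10))
   (iota 0 10)) (iota 0 11).
Lemma chk_F0T : chk_F0. Proof. by vm_compute. Qed.

Local Open Scope ring_scope.

Lemma ex_trE (a b : 'I_10) : ex_tr a b = tN a b. Proof. by []. Qed.

Lemma leaf_nbr (w y : 'I_10) : (3 < nat_of_ord w)%N -> ex_tr w y -> nat_of_ord y = par (nat_of_ord w).
Proof.
move=> hw; rewrite ex_trE => ht.
have := chk_leafT; rewrite /chk_leaf => /allP H.
have hw2 : (3 < nat_of_ord w)%N := hw.
have wi : nat_of_ord w \in iota 4 6.
 rewrite mem_iota; have := ltn_ord w; move=> h. apply/andP; split; lia.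
have yi : nat_of_ord y \in iota 0 10 by rewrite mem_iota; have := ltn_ord y; move=> h; apply/andP; split; lia.
have /allP H2 := H _ wi.
have := H2 _ yi.
by rewrite ht => /eqP.
Qed.

Lemma inS (x u : 'I_10) : (x \in setT :\ u) = (nat_of_ord x != nat_of_ord u).
Proof. by rewrite !inE andbT. Qed.

Lemma par_bound a : (par a < 10)%N /\ par a != 0%N.
Proof. rewrite /par; split => //; have := ltn_pmod (a - 4) (isT : 0 < 3)%N; lia. Qed.

Lemma leafcov (F : {set 'I_6}) (w : 'I_10) : feasible ex_tr ex_ends F -> (3 < nat_of_ord w)%N ->
  exists2 l : 'I_6, l \in F & (e1 l == nat_of_ord w) || (e2 l == nat_of_ord w).
Proof.
move=> [_ _ hc] hw.
have [pb pn] := par_bound (nat_of_ord w).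
set u : 'I_10 := Ordinal pb.
have r0 : (ord0 : 'I_10) \in setT :\ u.
  by rewrite inS.
have wS : w \in setT :\ u.
  rewrite inS /=; apply/eqP => e; move: hw; rewrite e /par.
  have := ltn_pmod (nat_of_ord w - 4) (isT : 0 < 3)%N; lia.
have := hc u w ord0 wS r0 => /connectP [[|y p] /=].
  by move=> _ e; move: hw; rewrite -e.
case/andP => /and3P [_ yS ewy] _ _.
case/orP: ewy => [/(leaf_nbr w y hw) ey|].
  by move: yS; rewrite inS /= ey eqxx.
case/existsP => l /andP [lF hl]; exists l => //.
case/orP: hl => /andP [/eqP h1 /eqP h2].
  by rewrite -h1 endsE1 eqxx.
by rewrite -h2 endsE2 eqxx orbT.
Qed.

Definition bF (F : {set 'I_6}) (i : nat) : bool := [exists l in F, nat_of_ord l == i].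

Lemma cardF (F : {set 'I_6}) :
  #|F| = (bF F 0 + bF F 1 + bF F 2 + bF F 3 + bF F 4 + bF F 5)%N.
Proof.
rewrite -sum1_card big_mkcond /=.
have -> : (\sum_(l < 6) (if l \in F then 1 else 0) = \sum_(l < 6) bF F l)%N.
  apply: eq_bigr => l _.
  have -> : bF F l = (l \in F).
    apply/existsP/idP => [[l' /andP [l'F /eqP e]]|lF]; last by exists l; rewrite lF eqxx.
    by have <- : l' = l by apply: val_inj.
  by case: (l \in F).
rewrite -(big_mkord xpredT (fun i => (bF F i : nat))).
by rewrite /index_iota /= !big_cons big_nil /= !addnA addn0.
Qed.

Lemma cov (F : {set 'I_6}) (w : nat) : feasible ex_tr ex_ends F -> (3 < w < 10)%N ->
  has (fun i => bF F i && ((e1 i == w) || (e2 i == w))) (iota 0 6).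
Proof.
move=> hF /andP [h3 h10].
have [l lF hl] := leafcov F (Ordinal h10) hF h3.
apply/hasP; exists (nat_of_ord l); first by rewrite mem_iota /=.
by rewrite hl andbT; apply/existsP; exists l; rewrite lF eqxx.
Qed.

Lemma part1 (F : {set 'I_6}) : feasible ex_tr ex_ends F -> 4 <= link_cost ex_cost F.
Proof.
move=> hF; rewrite /link_cost /ex_cost sumr_const ler_nat cardF.
have := cov F 4 hF isT; have := cov F 5 hF isT; have := cov F 6 hF isT.
have := cov F 7 hF isT; have := cov F 8 hF isT; have := cov F 9 hF isT.
rewrite /=.
by case: (bF F 0); case: (bF F 1); case: (bF F 2); case: (bF F 3); case: (bF F 4); case: (bF F 5).
Qed.

Lemma ordE (x y : 'I_10) : (x == y) = (nat_of_ord x == nat_of_ord y). Proof. by []. Qed.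

Definition F0 : {set 'I_6} := [set l : 'I_6 | nat_of_ord l \in F0n].
Definition e0 (a b : 'I_10) : bool := ex_tr a b || link_rel ex_ends F0 a b.

Lemma RF_E (u : nat) (S : {set 'I_10}) (hS : forall a : 'I_10, (a \in S) = (nat_of_ord a != u))
  (a b : 'I_10) : RF u a b -> restrict e0 S a b.
Proof.
rewrite /restrict !hS => /and3P [-> -> /orP [ht|hl]] /=; first by rewrite /e0 ex_trE ht.
apply/orP; right; case/hasP: hl => l; rewrite mem_iota /= => hl6 /andP [lF hl].
apply/existsP; exists (Ordinal hl6); rewrite inE !ordE endsE1 endsE2 -[nat_of_ord (Ordinal hl6)]/l lF /=.
by case/orP: hl => /andP [/eqP -> /eqP ->]; rewrite !eqxx ?orbT.
Qed.

Lemma conn_F0 (u : nat) (S : {set 'I_10}) (hS : forall a : 'I_10, (a \in S) = (nat_of_ord a != u))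
  : (u < 11)%N -> connected_on e0 S.
Proof.
move=> hu x y; rewrite !hS => hx hy.
have := chk_F0T; rewrite /chk_F0 => /allP H.
have um : u \in iota 0 11 by rewrite mem_iota.
have xm : nat_of_ord x \in iota 0 10 by rewrite mem_iota /=.
have ym : nat_of_ord y \in iota 0 10 by rewrite mem_iota /=.
have /allP H1 := H u um.
have := H1 _ xm; rewrite (negbTE hx) orFb => /allP H2.
have := H2 _ ym; rewrite (negbTE hy) orFb => /(@reachP _ _ (RF_E u S hS)) [y' ey' c].
by have <- : y' = y by apply: ord_inj.
Qed.

Lemma bF0 i : (i < 6)%N -> bF F0 i = (i \in F0n).
Proof.
move=> hi; apply/existsP/idP => [[l /andP [lF /eqP <-]]|h].
  by move: lF; rewrite inE.
by exists (Ordinal hi); rewrite inE /= h eqxx.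
Qed.

Lemma part2 : feasible ex_tr ex_ends F0 /\ link_cost ex_cost F0 = 4.
Proof.
split.
  split; first by rewrite card_ord.
    by apply: (conn_F0 10) => // a; rewrite inE; have := ltn_ord a; case: eqP => // ->.
  move=> u; apply: (conn_F0 (nat_of_ord u)); first by move=> a; apply: inS.
  by have := ltn_ord u; lia.
rewrite /link_cost /ex_cost sumr_const.
by rewrite cardF !bF0.
Qed.

Lemma card3 (T : finType) (a b c : T) : (#|[set a; b; c]| <= 1 + (b != a) + (c != a))%N.
Proof.
have U2 (x y : T) : (#|[set x] :|: [set y]| <= 2)%N.
  by apply: leq_trans (leq_card_setU _ _) _; rewrite !cards1.
case: (eqVneq b a) => [->|hb]; case: (eqVneq c a) => [->|hc] /=.
- by rewrite !setUid cards1.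
- by rewrite setUid.
- by rewrite -setUA (setUC [set b]) setUA setUid.
apply: leq_trans (leq_card_setU _ _) _; rewrite cards1.
by have := U2 a b; rewrite -(leq_add2r 1) addn1.
Qed.

Definition chk_ends2 : bool := all (fun u => all (fun l =>
   [&& 3 < e1 l, 3 < e2 l, cls u (e1 l) < 3 & cls u (e2 l) < 3]%N) (iota 0 6)) (iota 0 4).
Lemma chk_ends2T : chk_ends2. Proof. by vm_compute. Qed.

Lemma nonleaf_small (u : 'I_10) : nonleaf ex_tr u -> (nat_of_ord u < 4)%N.
Proof.
rewrite /nonleaf; apply: contraLR; rewrite -!leqNgt => hu.
have [pb _] := par_bound (nat_of_ord u).
apply: leq_trans (subset_leq_card (B := [set Ordinal pb]) _) _; last by rewrite cards1.
apply/subsetP => w; rewrite !inE => /(leaf_nbr u w hu) e.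
by apply/eqP/ord_inj.
Qed.

Lemma lp_u (u : 'I_10) (P : {set {set 'I_10}}) : (nat_of_ord u < 4)%N -> in_Pi ex_tr u P ->
  (#|P|%:R - 1 : rat) <= \sum_(l | crosses ex_ends u P l) ex_xhat l.
Proof.
move=> hu [hpart hcomp].
have htriv : trivIset P by case/and3P: hpart.
have hcov := cover_partition hpart.
have hn0 : set0 \notin P by case/and3P: hpart.
have um : nat_of_ord u \in iota 0 4 by rewrite mem_iota.
pose c (i : nat) : 'I_10 := inord (rep u i).
have crep i : (i < 3)%N -> nat_of_ord (c i) = rep u i.
  move=> hi; rewrite inordK //.
  have := chk_repT; rewrite /chk_rep => /allP H; have /allP H1 := H _ um.
  by apply: H1; rewrite mem_iota.
have HRE : forall a b : 'I_10, RT u a b -> restrict ex_tr (setT :\ u) a b.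
  by move=> a b; rewrite /restrict !inS => /and3P [-> -> ht]; rewrite ex_trE.
have Hc : forall x : 'I_10, x != u ->
    (cls u x < 3)%N /\ connect (restrict ex_tr (setT :\ u)) x (c (cls u x)).
  move=> x hx.
  have := chk_compT; rewrite /chk_comp => /allP H; have /allP H1 := H _ um.
  have xm : nat_of_ord x \in iota 0 10 by rewrite mem_iota /=.
  have hx' : (nat_of_ord x != nat_of_ord u) := hx.
  have := H1 _ xm; rewrite (negbTE hx') orFb => /andP [hlt hr].
  split => //.
  have [y ey cy] := @reachP _ _ HRE _ _ _ hr.
  by have -> : c (cls u x) = y by apply: ord_inj; rewrite crep.
set f := pblock P.
have Hf : forall x : 'I_10, x != u -> f x = f (c (cls u x)).
  move=> x hx; have [hlt hcon] := Hc x hx; have [B BP sub] := hcomp x hx.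
  have xB : x \in B by apply: (subsetP sub); rewrite inE connect0.
  have cB : c (cls u x) \in B by apply: (subsetP sub); rewrite inE.
  by rewrite /f (def_pblock htriv BP xB) (def_pblock htriv BP cB).
set bs := [:: f (c 0%N); f (c 1%N); f (c 2%N)].
pose gi i := index (f (c i)) bs.
have memb i : (i < 3)%N -> f (c i) \in bs.
  by case: i => [|[|[|]]] //= _; rewrite !inE eqxx ?orbT.
have Hg : forall i j, (i < 3)%N -> (j < 3)%N -> (gi i == gi j) = (f (c i) == f (c j)).
  move=> i j hi hj; apply/eqP/eqP => [e|e]; last by rewrite /gi e.
  by rewrite -(nth_index (f (c 0%N)) (memb _ hi)) -(nth_index (f (c 0%N)) (memb _ hj)) -/(gi i) -/(gi j) e.
have glt i : (i < 3)%N -> gi i \in iota 0 3.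
  by move=> hi; rewrite mem_iota /= add0n; have := memb _ hi; rewrite -index_mem.
have hPsub : P \subset [set f (c 0%N); f (c 1%N); f (c 2%N)].
  apply/subsetP => B BP.
  have /set0Pn [x xB] : B != set0 by apply: contraNneq hn0 => <-.
  have : x \in cover P by apply/bigcupP; exists B.
  rewrite hcov inS => hx.
  have <- : f x = B by rewrite /f (def_pblock htriv BP xB).
  rewrite (Hf x hx); have [hlt _] := Hc x hx.
  by move: hlt; case: (cls u x) => [|[|[|]]] // _; rewrite !inE eqxx ?orbT.
have hcard : (#|P| <= 1 + ((gi 1%N != gi 0%N) + (gi 2%N != gi 0%N)))%N.
  apply: leq_trans (subset_leq_card hPsub) _.
  by rewrite addnA Hg // Hg //; apply: card3.
pose g := [:: gi 0%N; gi 1%N; gi 2%N].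
have nthg i : (i < 3)%N -> nth 0%N g i = gi i by case: i => [|[|[|]]].
have hcr : forall l : 'I_6, crosses ex_ends u P l =
    (nth 0%N g (cls u (e1 l)) != nth 0%N g (cls u (e2 l))).
  move=> l.
  have := chk_ends2T; rewrite /chk_ends2 => /allP H; have /allP H1 := H _ um.
  have lm : nat_of_ord l \in iota 0 6 by rewrite mem_iota /=.
  have /and4P [a1 a2 a3 a4] := H1 _ lm.
  have h1 : (ex_ends l).1 != u by rewrite ordE endsE1; apply/eqP => e; move: a1; rewrite e; lia.
  have h2 : (ex_ends l).2 != u by rewrite ordE endsE2; apply/eqP => e; move: a2; rewrite e; lia.
  rewrite /crosses h1 h2 !andTb -/f (Hf _ h1) (Hf _ h2) endsE1 endsE2.
  by rewrite (nthg _ a3) (nthg _ a4) Hg.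
rewrite (eq_bigl _ _ hcr).
set Qn := fun n : nat => nth 0%N g (cls u (e1 n)) != nth 0%N g (cls u (e2 n)).
have -> : \sum_(l < 6 | nth 0%N g (cls u (e1 l)) != nth 0%N g (cls u (e2 l))) ex_xhat l
    = (1 / 2) *+ count Qn (iota 0 6).
  rewrite -(big_mkord Qn (fun _ => 1 / 2)) big_const_seq iter_addr_0.
  by [].
have hcomb : (2 * ((gi 1%N != gi 0%N) + (gi 2%N != gi 0%N)) <= count Qn (iota 0 6))%N.
  have := chk_combT; rewrite /chk_comb => /allP H; have /allP H1 := H _ um.
  have /allP H2 := H1 _ (glt 0%N isT).
  have /allP H3 := H2 _ (glt 1%N isT).
  exact: (H3 _ (glt 2%N isT)).
move: hcard hcomb; set k := ((gi 1%N != gi 0%N) + (gi 2%N != gi 0%N))%N.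
set m := count Qn (iota 0 6).
rewrite -(ler_nat rat) -(ler_nat rat) natrD natrM => h1 h2.
rewrite -mulr_natr; lra.
Qed.

Theorem mainTheorem7 :
  [/\ (forall F : {set 'I_6}, feasible ex_tr ex_ends F -> 4 <= link_cost ex_cost F),
      (exists F : {set 'I_6}, feasible ex_tr ex_ends F /\ link_cost ex_cost F = 4),
      partLP_feasible ex_tr ex_ends ex_xhat,
      LP_cost ex_cost ex_xhat = 3 &
      (* integrality ratio of (P) on this instance: OPT / LP value >= 4/3 *)
      (forall F : {set 'I_6}, feasible ex_tr ex_ends F ->
         4 / 3 <= link_cost ex_cost F / LP_cost ex_cost ex_xhat)].
Proof.
have hLP : LP_cost ex_cost ex_xhat = 3.
  rewrite /LP_cost /ex_cost /ex_xhat sumr_const card_ord mul1r -mulr_natr; lra.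
split => //.
- exact: part1.
- by exists F0; exact: part2.
- split; first by move=> l; rewrite /ex_xhat; lra.
  by move=> u P hn hP; apply: lp_u => //; apply: nonleaf_small.
move=> F hF; rewrite hLP; have := part1 F hF; lra.
Qed.
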